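(* Let $d\in\{0,1,\dots,S\}$ and let $\bar\xi_d$ be the uniform design on $\mathcal{X}^{(S)}_d$. Then its information matrix is block diagonal, $$\mathbf{M}(\bar\xi_d)=\begin{pmatrix} h_1(d)\,\mathbf{Id}_{K}\otimes\mathbf{M} & \mathbf{0} & \mathbf{0}\\ \mathbf{0} & h_2(d)\,\mathbf{Id}_{\binom K2}\otimes\mathbf{M}\otimes\mathbf{M} & \mathbf{0}\\ \mathbf{0} & \mathbf{0} & h_3(d)\,\mathbf{Id}_{\binom K3}\otimes\mathbf{M}\otimes\mathbf{M}\otimes\mathbf{M}\end{pmatrix},$$ where the three diagonal blocks correspond to the main-effect, first-order-interaction and second-order-interaction components of $\mathbf{f}$, and $$h_1(d)=\frac{d}{K},\qquad h_2(d)=\frac{d}{2vK(K-1)}\,(2Sv-2S-dv-v+2),\qquad h_3(d)=\frac{d\,\lambda(d)}{4v^2K(K-1)(K-2)},$$ with $$\lambda(d)=3S^2+3S^2v^2-6S^2v-3Sdv^2+3Sdv-6Sv^2+15Sv-9S+d^2v^2+3dv^2-6dv+2v^2-6v+6 .$$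
   Context: Fix integers $v\ge 2$, $K\ge 3$ and $S$ with $3\le S\le K$. Let $\mathbf{e}_i$ denote the $i$th unit vector of $\mathbb{R}^{v-1}$ and $\mathbf{1}_{v-1}$ the all-ones vector. Define $\mathbf{f}_1:\{0,1,\dots,v\}\to\mathbb{R}^{v-1}$ by $\mathbf{f}_1(i)=\mathbf{e}_i$ for $1\le i\le v-1$, $\mathbf{f}_1(v)=-\mathbf{1}_{v-1}$, $\mathbf{f}_1(0)=\mathbf{0}$. For $\mathbf{i}=(i_1,\dots,i_K)\in\{0,\dots,v\}^K$ let $\mathbf{f}(\mathbf{i})\in\mathbb{R}^p$ be the vector obtained by stacking the vectors $\mathbf{f}_1(i_k)$ ($k=1,\dots,K$), then $\mathbf{f}_1(i_k)\otimes\mathbf{f}_1(i_\ell)$ ($k<\ell$, lexicographic order), then $\mathbf{f}_1(i_k)\otimes\mathbf{f}_1(i_\ell)\otimes\mathbf{f}_1(i_m)$ ($k<\ell<m$, lexicographic order); here $\otimes$ is the Kronecker product and $p=p_1+p_2+p_3$ with $p_1=K(v-1)$, $p_2=\binom K2(v-1)^2$, $p_3=\binom K3(v-1)^3$. The design region $\mathcal{X}^{(S)}$ is the set of ordered pairs $(\mathbf{i},\mathbf{j})$ with $\mathbf{i},\mathbf{j}\in\{0,\dots,v\}^K$ for which there is a set $A$ of exactly $S$ attributes with $i_k,j_k\in\{1,\dots,v\}$ for $k\in A$ and $i_k=j_k=0$ for $k\notin A$. For $d\in\{0,\dots,S\}$, $\mathcal{X}^{(S)}_d$ is the set of pairs in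 $\mathcal{X}^{(S)}$ with $i_k\ne j_k$ for exactly $d$ indices $k$ (the comparison depth). An approximate design $\xi$ is a finitely supported probability measure on $\mathcal{X}^{(S)}$, with information matrix $\mathbf{M}(\xi)=\sum_{(\mathbf{i},\mathbf{j})}\xi(\mathbf{i},\mathbf{j})(\mathbf{f}(\mathbf{i})-\mathbf{f}(\mathbf{j}))(\mathbf{f}(\mathbf{i})-\mathbf{f}(\mathbf{j}))^\top$. The design $\bar\xi_d$ assigns weight $1/|\mathcal{X}^{(S)}_d|$ to each pair of $\mathcal{X}^{(S)}_d$ and $0$ elsewhere. Finally $\mathbf{M}=\frac{2}{v-1}(\mathbf{Id}_{v-1}+\mathbf{1}_{v-1}\mathbf{1}_{v-1}^\top)$. *)

(* Defs.v *)
From HB Require Import structures.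
From mathcomp Require Import all_boot all_order all_algebra.
Set Implicit Arguments. Unset Strict Implicit. Unset Printing Implicit Defensive.
Import Order.TTheory GRing.Theory Num.Theory.
Local Open Scope ring_scope.

Definition profile (K v : nat) := {ffun 'I_K -> 'I_v.+1}.

(* f_1(i) in R^(v-1), coordinate a (0-based, a < v-1):
   f_1(0) = 0, f_1(i) = e_i (1 <= i <= v-1), f_1(v) = -1. *)
Definition f1 {R : numFieldType} (v : nat) (i : 'I_v.+1) (a : 'I_v.-1) : R :=
  if (i : nat) == v then -1
  else if (i : nat) == a.+1 then 1 else 0.

Definition pair_idx (K : nat) := {x : 'I_K * 'I_K | (x.1 < x.2)%N}.
Definition trip_idx (K : nat) :=
  {x : 'I_K * 'I_K * 'I_K | (x.1.1 < x.1.2)%N && (x.1.2 < x.2)%N}.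

(* Coordinates of f(i) in R^p, p = p1 + p2 + p3:
   main effects (k, a), two-factor ((k,l), a, b), three-factor ((k,l,m), a, b, c);
   the Kronecker coordinate (a,b[,c]) carries f1(i_k)_a f1(i_l)_b [f1(i_m)_c]. *)
Definition fcoord (K v : nat) : finType :=
  (('I_K * 'I_v.-1) + (pair_idx K * 'I_v.-1 * 'I_v.-1)
   + (trip_idx K * 'I_v.-1 * 'I_v.-1 * 'I_v.-1))%type.

Definition fvec {R : numFieldType} (K v : nat) (i : profile K v) (c : fcoord K v) : R :=
  match c with
  | inl (inl (k, a)) => f1 (i k) a
  | inl (inr (kl, a, b)) => f1 (i (val kl).1) a * f1 (i (val kl).2) b
  | inr (klm, a, b, e) =>
      f1 (i (val klm).1.1) a * f1 (i (val klm).1.2) b * f1 (i (val klm).2) e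
  end.

Definition in_XS (K v S : nat) (x : profile K v * profile K v) : bool :=
  [exists A : {set 'I_K}, (#|A| == S) &&
     [forall k, if k \in A then (x.1 k != ord0) && (x.2 k != ord0)
                else (x.1 k == ord0) && (x.2 k == ord0)]].

Definition in_XSd (K v S d : nat) (x : profile K v * profile K v) : bool :=
  in_XS S x && (#|[set k | x.1 k != x.2 k]| == d).

Definition design (R : numFieldType) (K v : nat) := {ffun profile K v * profile K v -> R}.

Definition infoM {R : numFieldType} (K v : nat) (xi : design R K v)
  (c c' : fcoord K v) : R :=
  \sum_(x : profile K v * profile K v)
    xi x * ((fvec x.1 c - fvec x.2 c) * (fvec x.1 c' - fvec x.2 c')).

Definition xibar (R : numFieldType) (K v S d : nat) : design R K v :=
  [ffun x : profile K v * profile K v =>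
     if in_XSd S d x then (#|[pred y : profile K v * profile K v | in_XSd S d y]|%:R)^-1
     else 0].

Definition Mm {R : numFieldType} (v : nat) (a a' : 'I_v.-1) : R :=
  2 / (v.-1)%:R * ((a == a')%:R + 1).

Definition h1 {R : numFieldType} (K v S d : nat) : R := d%:R / K%:R.
Definition h2 {R : numFieldType} (K v S d : nat) : R :=
  d%:R / (2 * v%:R * K%:R * (K%:R - 1)) *
  (2 * S%:R * v%:R - 2 * S%:R - d%:R * v%:R - v%:R + 2).
Definition lambda {R : numFieldType} (v S d : nat) : R :=
  let S := (S%:R : R) in let v := (v%:R : R) in let d := (d%:R : R) in
  3 * S ^+ 2 + 3 * S ^+ 2 * v ^+ 2 - 6 * S ^+ 2 * v - 3 * S * d * v ^+ 2
  + 3 * S * d * v - 6 * S * v ^+ 2 + 15 * S * v - 9 * S + d ^+ 2 * v ^+ 2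
  + 3 * d * v ^+ 2 - 6 * d * v + 2 * v ^+ 2 - 6 * v + 6.
Definition h3 {R : numFieldType} (K v S d : nat) : R :=
  d%:R * lambda v S d /
  (4 * v%:R ^+ 2 * K%:R * (K%:R - 1) * (K%:R - 2)).

Definition blockM {R : numFieldType} (K v S d : nat) (c c' : fcoord K v) : R :=
  match c, c' with
  | inl (inl (k, a)), inl (inl (k', a')) =>
      h1 K v S d * ((k == k')%:R * Mm a a')
  | inl (inr (kl, a, b)), inl (inr (kl', a', b')) =>
      h2 K v S d * ((kl == kl')%:R * Mm a a' * Mm b b')
  | inr (klm, a, b, e), inr (klm', a', b', e') =>
      h3 K v S d * ((klm == klm')%:R * Mm a a' * Mm b b' * Mm e e')
  | _, _ => 0
  end.

(* Main.v *)
Require Import Defs.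
From HB Require Import structures.
From mathcomp Require Import all_boot all_order all_algebra.
From mathcomp Require Import ring lra zify.
Set Implicit Arguments. Unset Strict Implicit. Unset Printing Implicit Defensive.
Import Order.TTheory GRing.Theory Num.Theory.
Local Open Scope ring_scope.


Notation PP K v := (profile K v * profile K v)%type.
Notation AA v := ('I_v.+1 * 'I_v.+1)%type.

Definition st {K v} (x : PP K v) (k : 'I_K) : AA v := (x.1 k, x.2 k).
Definition upd {K v} (x : PP K v) (k : 'I_K) (s : AA v) : PP K v :=
  ([ffun j => if j == k then s.1 else x.1 j], [ffun j => if j == k then s.2 else x.2 j]).

Definition clsn {v} (s : AA v) : nat :=
  if s.1 == ord0 then (if s.2 == ord0 then 0 else 3)%N
  else if s.2 == ord0 then 3%N else if s.1 == s.2 then 1%N else 2%N.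
Arguments clsn : simpl never.
Lemma clsn_lt {v} (s : AA v) : (clsn s < 4)%N.
Proof. by rewrite /clsn; repeat case: ifP. Qed.
Definition cls {v} (s : AA v) : 'I_4 := Ordinal (clsn_lt s).

Definition rep {v} (c : 'I_4) : AA v :=
  match val c with
  | 0 => (ord0, ord0)
  | 1 => (inord 1, inord 1)
  | 2 => (inord 1, inord 2)
  | _ => (inord 1, ord0)
  end%N.

Lemma cls_rep v (hv : (2 <= v)%N) (c : 'I_4) : cls (@rep v c) = c.
Proof.
apply: val_inj => /=; rewrite /rep /clsn.
case: c => [[|[|[|[|c]]]] hc] //=; rewrite -?val_eqE /= ?inordK //; try lia.
all: by case: ifP => //; rewrite ?inordK //; lia.
Qed.

Lemma st_upd K v (x : PP K v) k s j : st (upd x k s) j = if j == k then s else st x j.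
Proof. by rewrite /st /upd /= !ffunE; case: (j == k); rewrite -?surjective_pairing. Qed.

Lemma upd_st K v (x : PP K v) k : upd x k (st x k) = x.
Proof.
case: x => a b; rewrite /upd /st /=; congr (_, _); apply/ffunP => j; rewrite ffunE;
by case: eqP => // ->.
Qed.

Lemma upd_upd K v (x : PP K v) k s s' : upd (upd x k s) k s' = upd x k s'.
Proof.
rewrite /upd /=; congr (_, _); apply/ffunP => j; rewrite !ffunE; by case: eqP.
Qed.

Lemma st_eq K v (x y : PP K v) : (forall j, st x j = st y j) -> x = y.
Proof.
case: x => a b; case: y => c d /= h; congr (_,_); apply/ffunP => j;
by have := h j; rewrite /st /= => -[].
Qed.

Section Step.
Variable R : numFieldType.

Lemma Tclass K v (P : pred (PP K v)) k (H : PP K v -> R) s s' :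
  (forall x s s', cls s = cls s' -> P (upd x k s) = P (upd x k s')) ->
  (forall x s, H (upd x k s) = H x) -> cls s = cls s' ->
  \sum_(x | P x && (st x k == s)) H x = \sum_(x | P x && (st x k == s')) H x.
Proof.
move=> hP hH hc.
case: (eqVneq s s') => [<- //|ne].
pose h x := if st x k == s' then upd x k s else if st x k == s then upd x k s' else x.
have hK : cancel h h.
  move=> x; rewrite /h; case: (eqVneq (st x k) s') => e1.
    rewrite st_upd eqxx (negbTE ne) eqxx upd_upd -e1 upd_st //.
  case: (eqVneq (st x k) s) => e2.
    by rewrite st_upd eqxx eqxx upd_upd -e2 upd_st.
  by rewrite (negbTE e1) (negbTE e2).
rewrite (reindex_inj (can_inj hK)); apply: eq_big => x.
  rewrite /h; case: (eqVneq (st x k) s') => e1.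
    by rewrite st_upd eqxx eqxx andbT (hP _ _ s') // -e1 upd_st andbT.
  case: (eqVneq (st x k) s) => e2.
    by rewrite st_upd eqxx eq_sym (negbTE ne) !andbF.
  by rewrite (negbTE e2) !andbF.
move=> _; rewrite /h; case: ifP => _; first by rewrite hH.
by case: ifP => _; rewrite ?hH.
Qed.

Lemma step K v (hv : (2 <= v)%N) (P : pred (PP K v)) k (G : AA v -> R) (H : PP K v -> R) :
  (forall x s s', cls s = cls s' -> P (upd x k s) = P (upd x k s')) ->
  (forall x s, H (upd x k s) = H x) ->
  \sum_(x | P x) G (st x k) * H x =
  \sum_(c : 'I_4) (\sum_(s | cls s == c) G s) * \sum_(x | P x && (st x k == rep c)) H x.
Proof.
move=> hP hH.
rewrite (partition_big (fun x => st x k) predT) //=.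
transitivity (\sum_(s : AA v) G s * \sum_(x | P x && (st x k == rep (cls s))) H x).
  apply: eq_bigr => s _; rewrite (Tclass hP hH (s:=rep (cls s)) (s':=s)); last by rewrite cls_rep.
  rewrite mulr_sumr.
  by apply: eq_bigr => x /andP[_ /eqP ->].
rewrite (partition_big cls predT) //=; apply: eq_bigr => c _; rewrite mulr_suml.
by apply: eq_bigr => s /eqP ->.
Qed.
End Step.


Definition act (c : 'I_4) : bool := (val c == 1%N) || (val c == 2%N).
Definition dif (c : 'I_4) : bool := (val c == 2%N).

Definition Q {K v} (F : {set 'I_K}) (r : 'I_K -> AA v) (s e : nat) (x : PP K v) : bool :=
  [&& [forall j, (j \notin F) ==> (st x j == r j)],
      [forall j, (j \in F) ==> (val (cls (st x j)) != 3%N)],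
      (#|[set j in F | act (cls (st x j))]| == s) &
      (#|[set j in F | dif (cls (st x j))]| == e)].

Definition rset {K v} (r : 'I_K -> AA v) k (s : AA v) := fun j => if j == k then s else r j.

Lemma Q_inv K v (F : {set 'I_K}) (r : 'I_K -> AA v) s e k x (a b : AA v) :
  k \in F -> cls a = cls b -> Q F r s e (upd x k a) = Q F r s e (upd x k b).
Proof.
move=> hk hab; rewrite /Q.
have h1 : forall j, cls (st (upd x k a) j) = cls (st (upd x k b) j).
  by move=> j; rewrite !st_upd; case: (j == k).
have h2 : [forall j, (j \notin F) ==> (st (upd x k a) j == r j)] =
          [forall j, (j \notin F) ==> (st (upd x k b) j == r j)].
  apply: eq_forallb => j; rewrite !st_upd; case: (eqVneq j k) => [->|jk] //; by rewrite hk.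
rewrite h2.
have -> : [set j in F | act (cls (st (upd x k a) j))] = [set j in F | act (cls (st (upd x k b) j))].
  by apply/setP => j; rewrite !inE h1.
have -> : [set j in F | dif (cls (st (upd x k a) j))] = [set j in F | dif (cls (st (upd x k b) j))].
  by apply/setP => j; rewrite !inE h1.
congr [&& _, _, _ & _].
by apply: eq_forallb => j; rewrite h1.
Qed.

Lemma card_split K (F : {set 'I_K}) k (P : pred 'I_K) : k \in F ->
  #|[set j in F | P j]| = (P k + #|[set j in F :\ k | P j]|)%N.
Proof.
move=> hk; rewrite (cardsD1 k).
have -> : [set j in F | P j] :\ k = [set j in F :\ k | P j].
  by apply/setP=> j; rewrite !inE; case: (j == k).
by rewrite inE hk.
Qed.

Lemma Qfix K v (hv : (2 <= v)%N) (F : {set 'I_K}) (r : 'I_K -> AA v) s e k x (c : 'I_4) :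
  k \in F -> val c != 3%N ->
  (Q F r s e x && (st x k == rep c)) =
  [&& (act c <= s)%N, (dif c <= e)%N &
     Q (F :\ k) (rset r k (rep c)) (s - act c) (e - dif c) x].
Proof.
move=> hk hc; rewrite /Q.
rewrite (card_split (fun j => act (cls (st x j))) hk).
rewrite (card_split (fun j => dif (cls (st x j))) hk).
apply/idP/idP.
- case/andP=> /and4P[/forallP h1 /forallP h2 /eqP h3 /eqP h4] /eqP hx.
  move: h3 h4; rewrite /= hx cls_rep // => h3 h4.
  apply/and3P; split; try lia.
  apply/and4P; split.
  + apply/forallP => j; rewrite /rset !inE negb_and negbK; case: eqP => [->|/eqP jk] /=.
      by rewrite hx.
    exact: h1.
  + apply/forallP => j; rewrite !inE; apply/implyP => /andP[_ hj]; exact: (implyP (h2 j) hj).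
  + apply/eqP; lia.
  + apply/eqP; lia.
- case/and3P => ha hd /and4P[/forallP h1 /forallP h2 /eqP h3 /eqP h4].
  have hx : st x k = rep c by have := h1 k; rewrite !inE eqxx /rset eqxx => /eqP.
  rewrite hx eqxx andbT cls_rep //; apply/and4P; split.
  + apply/forallP => j; apply/implyP => hj.
    have jk : j != k by apply: contraNneq hj => ->.
    by have := h1 j; rewrite !inE jk /= hj /rset (negbTE jk).
  + apply/forallP => j; apply/implyP => hj; case: (eqVneq j k) => [->|jk].
      by rewrite hx cls_rep.
    by have := h2 j; rewrite !inE jk hj.
  + apply/eqP; lia.
  + apply/eqP; lia.
Qed.


Definition cnt (v n s e : nat) : nat := ('C(n, s) * 'C(s, e) * v ^ (s - e) * (v * (v - 1)) ^ e)%N.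

Lemma cnt_rec v n s e :
  cnt v n.+1 s e = (cnt v n s e + (if (1 <= s)%N then v * cnt v n (s - 1) e else 0) +
     (if (1 <= s)%N && (1 <= e)%N then v * (v - 1) * cnt v n (s - 1) (e - 1) else 0))%N.
Proof.
rewrite /cnt; case: s => [|s] /=.
  by rewrite !bin0 addn0 addn0.
rewrite binS subSS subn0 !mulnDl -addnA; congr (_ + _)%N.
case: e => [|e] /=.
  by rewrite !bin0 !subn0 addn0 expnS; ring.
rewrite binS subSS ?subn0 expnS.
have -> : (e.+1 - 1 = e)%N by lia.
case: (leqP e.+1 s) => hes.
  have -> : (s - e = (s - e.+1).+1)%N by lia.
  rewrite expnS; ring.
rewrite (bin_small hes).
have -> : (s - e.+1 = 0)%N by lia. 
ring.
Qed.

Section Sums.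
Variable R : numFieldType.

Lemma clsumE v (G : AA v -> R) (c : 'I_4) :
  \sum_(s | cls s == c) G s = \sum_i \sum_j (if clsn (i, j) == val c then G (i, j) else 0).
Proof.
rewrite pair_big /= big_mkcond; apply: eq_bigr => -[i j] _ /=.
by rewrite -val_eqE.
Qed.

Lemma clsn0 v (i j : 'I_v.+1) : (clsn (i, j) == 0%N) = (i == ord0) && (j == ord0).
Proof. rewrite /clsn /=; case: (i == ord0); case: (j == ord0) => //; by case: (i == j). Qed.
Lemma clsn1 v (i j : 'I_v.+1) : (clsn (i, j) == 1%N) = (i != ord0) && (j == i).
Proof.
rewrite /clsn /=; case: (eqVneq i ord0) => [ei|hi] /=; first by case: (j == ord0).
case: (eqVneq j ord0) => [ej|hj] /=; first by rewrite ej [ord0 == i]eq_sym (negbTE hi).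
by rewrite [j == i]eq_sym; case: (i == j).
Qed.
Lemma clsn2 v (i j : 'I_v.+1) : (clsn (i, j) == 2%N) = [&& i != ord0, j != ord0 & j != i].
Proof.
rewrite /clsn /=; case: (eqVneq i ord0) => [ei|hi] /=; first by case: (j == ord0).
case: (eqVneq j ord0) => [ej|hj] /=; first by [].
by rewrite [j == i]eq_sym; case: (i == j).
Qed.

Lemma cls0E v (p q : 'I_v.+1 -> R) :
  \sum_(s | cls s == (Ordinal (isT : (0 < 4)%N))) p s.1 * q s.2 = p ord0 * q ord0.
Proof.
rewrite clsumE (bigD1 ord0) //=.
rewrite [X in _ + X]big1 ?addr0; last by move=> i hi; apply: big1 => j _; rewrite clsn0 (negbTE hi).
rewrite (bigD1 ord0) //= [X in _ + X]big1 ?addr0; last by move=> j hj; rewrite clsn0 (negbTE hj) andbF.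
by rewrite ?clsn0 ?eqxx.
Qed.

Lemma cls1E v (p q : 'I_v.+1 -> R) :
  \sum_(s | cls s == (Ordinal (isT : (1 < 4)%N))) p s.1 * q s.2 =
  \sum_(i | i != ord0) p i * q i.
Proof.
rewrite clsumE [RHS]big_mkcond /=; apply: eq_bigr => i _.
rewrite (bigD1 i) //= big1 ?addr0; last first.
  by move=> j hj; rewrite clsn1 (negbTE hj) andbF.
by rewrite clsn1 eqxx andbT.
Qed.

Lemma cls2E v (p q : 'I_v.+1 -> R) :
  \sum_(s | cls s == (Ordinal (isT : (2 < 4)%N))) p s.1 * q s.2 =
  (\sum_(i | i != ord0) p i) * (\sum_(j | j != ord0) q j) - \sum_(i | i != ord0) p i * q i.
Proof.
rewrite clsumE mulr_suml -sumrB [RHS]big_mkcond /=; apply: eq_bigr => i _.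
case: (eqVneq i ord0) => [->|hi].
  by apply: big1 => j _; rewrite clsn2.
rewrite mulr_sumr [in RHS](bigD1 i) //= (addrC (p i * q i)) addrK [RHS]big_mkcond /=; apply: eq_bigr => j _.
by rewrite clsn2 hi /=; case: (j != ord0); case: (j != i).
Qed.

Lemma sum_eqn v (n : nat) : (n <= v)%N -> \sum_(i : 'I_v.+1) (((i : nat) == n)%:R : R) = 1.
Proof.
move=> hn; rewrite (bigD1 (inord n)) //= inordK // eqxx big1 ?addr0 //.
move=> i hi; case: eqP => // hin; move: hi; by rewrite -val_eqE /= inordK // hin eqxx.
Qed.

Lemma f10 v (hv : (2 <= v)%N) (a : 'I_v.-1) : f1 (ord0 : 'I_v.+1) a = 0 :> R.
Proof. rewrite /f1 /=; case: eqP => [|_]; first lia. by []. Qed.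

Lemma m0 v : \sum_(i : 'I_v.+1 | i != ord0) (1 : R) = v%:R.
Proof.
rewrite [LHS]sumr_const.
have -> : #|[pred i : 'I_v.+1 | i != ord0]| = v.
  by rewrite cardC1 card_ord.
by [].
Qed.

Lemma sum_nz v (F : 'I_v.+1 -> R) : F ord0 = 0 -> \sum_(i | i != ord0) F i = \sum_i F i.
Proof. by move=> h; rewrite [RHS](bigD1 ord0) //= h add0r. Qed.

Lemma m1 v (hv : (2 <= v)%N) (a : 'I_v.-1) : \sum_(i : 'I_v.+1 | i != ord0) f1 i a = 0 :> R.
Proof.
rewrite sum_nz ?f10 //.
have ha : (a.+1 < v)%N by have := ltn_ord a; lia.
transitivity (\sum_(i : 'I_v.+1) ((- 1) * (((i:nat) == v)%:R) + (((i:nat) == a.+1)%:R) : R)).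
  apply: eq_bigr => i _; rewrite /f1; case: eqP => [->|_]; case: eqP => //; try lia.
    by move=> _; rewrite mulr1 addr0.
  by move=> _; rewrite mulr0 add0r.
  by move=> _; rewrite mulr0 addr0.
by rewrite big_split /= -mulr_sumr !sum_eqn //; [rewrite mulr1 addNr | lia].
Qed.

Lemma m2 v (hv : (2 <= v)%N) (a b : 'I_v.-1) :
  \sum_(i : 'I_v.+1 | i != ord0) f1 i a * f1 i b = (a == b)%:R + 1 :> R.
Proof.
rewrite sum_nz ?f10 ?mul0r //.
have ha : (a.+1 < v)%N by have := ltn_ord a; lia.
have hb : (b.+1 < v)%N by have := ltn_ord b; lia.
transitivity (\sum_(i : 'I_v.+1) ((((i:nat) == v)%:R) + ((a == b)%:R * ((i:nat) == a.+1)%:R) : R)).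
  apply: eq_bigr => i _; rewrite /f1; case: (eqVneq (i:nat) v) => [->|hv'].
    rewrite (_ : (v == a.+1) = false); last by apply/eqP; lia.
    by rewrite mulr0 addr0 mulrNN mulr1.
  case: (eqVneq (i:nat) a.+1) => [hi|hi]; last by rewrite !mul0r mulr0 addr0.
  by rewrite mul1r add0r mulr1 hi eqSS val_eqE; case: (a == b).
by rewrite big_split /= -mulr_sumr !sum_eqn //; [rewrite mulr1 addrC | lia].
Qed.
End Sums.


Definition c0 : 'I_4 := Ordinal (isT : (0 < 4)%N).
Definition c1 : 'I_4 := Ordinal (isT : (1 < 4)%N).
Definition c2 : 'I_4 := Ordinal (isT : (2 < 4)%N).
Definition c3 : 'I_4 := Ordinal (isT : (3 < 4)%N).

Section Count.
Variable R : numFieldType.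

Lemma sum4 (F : 'I_4 -> R) : \sum_(c : 'I_4) F c = F c0 + F c1 + F c2 + F c3.
Proof.
rewrite !big_ord_recr big_ord0 /= add0r.
congr (F _ + F _ + F _ + F _); by apply: val_inj.
Qed.

Lemma Qfix_sum K v (hv : (2 <= v)%N) (F : {set 'I_K}) (r : 'I_K -> AA v) s e k (c : 'I_4)
  (H : PP K v -> R) :
  k \in F -> val c != 3%N ->
  \sum_(x | Q F r s e x && (st x k == rep c)) H x =
  if (act c <= s)%N && (dif c <= e)%N then
    \sum_(x | Q (F :\ k) (rset r k (rep c)) (s - act c) (e - dif c) x) H x else 0.
Proof.
move=> hk hc; rewrite (eq_bigl _ _ (fun x => Qfix hv r s e x hk hc)).
case: ifP => [/andP[-> ->] //| h]; apply: big_pred0 => x.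
by case: (act c <= s)%N h => //=; case: (dif c <= e)%N.
Qed.

Lemma Q3_sum K v (hv : (2 <= v)%N) (F : {set 'I_K}) (r : 'I_K -> AA v) s e k
  (H : PP K v -> R) : k \in F ->
  \sum_(x | Q F r s e x && (st x k == rep c3)) H x = 0.
Proof.
move=> hk; apply: big_pred0 => x; apply/negbTE; apply/andP => -[/and4P[_ /forallP h _ _] /eqP hx].
by have := h k; rewrite hk hx cls_rep.
Qed.

Lemma cls0_1 v : \sum_(s : AA v | cls s == c0) (1:R) = 1.
Proof. rewrite -[RHS](mulr1 1) -(@cls0E R v (fun _ => (1:R)) (fun _ => 1)). by apply: eq_bigr => *; rewrite mulr1. Qed.
Lemma cls1_1 v : \sum_(s : AA v | cls s == c1) (1:R) = v%:R.
Proof.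
have := @cls1E R v (fun _ => (1:R)) (fun _ => (1:R)) => /=.
under eq_bigr do rewrite mulr1. under [X in _ = X]eq_bigr do rewrite mulr1.
by rewrite m0.
Qed.
Lemma cls2_1 v : \sum_(s : AA v | cls s == c2) (1:R) = v%:R * v%:R - v%:R.
Proof.
have := @cls2E R v (fun _ => (1:R)) (fun _ => (1:R)) => /=.
under eq_bigr do rewrite mulr1. under [X in _ - X]eq_bigr do rewrite mulr1.
by rewrite !m0.
Qed.

Lemma x0_unique K v (r : 'I_K -> AA v) :
  \sum_(x : PP K v | [forall j, st x j == r j]) (1:R) = 1.
Proof.
pose x0 : PP K v := ([ffun j => (r j).1], [ffun j => (r j).2]).
rewrite (eq_bigl (fun x => x == x0)) ?big_pred1_eq // => x.
apply/forallP/eqP => [h|->]; last by move=> j; rewrite /st /= !ffunE -surjective_pairing.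
apply: st_eq => j; rewrite (eqP (h j)) /st /= !ffunE; exact: surjective_pairing.
Qed.

Lemma countQ K v (hv : (2 <= v)%N) n : forall (F : {set 'I_K}) (r : 'I_K -> AA v) s e,
  #|F| = n -> \sum_(x | Q F r s e x) (1:R) = (cnt v n s e)%:R.
Proof.
elim: n => [|n IH] F r s e hF.
  move/cards0_eq: hF => ->.
  rewrite (eq_bigl (fun x => [forall j, st x j == r j] && ((s == 0%N) && (e == 0%N)))); last first.
    move=> x; rewrite /Q.
    have E3 : forall P : pred 'I_K, [set j in set0 | P j] = set0.
      by move=> P; apply/setP => j; rewrite !inE.
    have E1 : [forall j, (j \notin (set0 : {set 'I_K})) ==> (st x j == r j)] = [forall j, st x j == r j].
      by apply: eq_forallb => j; rewrite inE.
    have E2 : [forall j, (j \in (set0 : {set 'I_K})) ==> (val (cls (st x j)) != 3%N)] = true.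
      by apply/forallP => j; rewrite inE.
    by rewrite !E3 E1 E2 !cards0 /= !(eq_sym 0%N).
  case: s => [|s]; case: e => [|e].
  - rewrite (eq_bigl (fun x => [forall j, st x j == r j])) ?x0_unique //.
    by move=> x; rewrite !eqxx !andbT.
  - by rewrite big_pred0 /cnt ?bin0n ?muln0 // => x; rewrite !andbF.
  - by rewrite big_pred0 /cnt ?bin0n ?muln0 ?mul0n // => x; rewrite !andbF.
  - by rewrite big_pred0 /cnt ?bin0n ?muln0 ?mul0n // => x; rewrite !andbF.
have [k hk] : exists k, k \in F by apply/card_gt0P; rewrite hF.
have hP : forall x a b, cls a = cls b -> Q F r s e (upd x k a) = Q F r s e (upd x k b).
  by move=> x a b h; apply: Q_inv.
have := @step R K v hv (Q F r s e) k (fun _ => 1) (fun _ => 1) hP (fun _ _ => erefl).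
rewrite /=; under eq_bigr do rewrite mulr1. move=> ->.
have hFk : #|F :\ k| = n by move: hF; rewrite (cardsD1 k) hk => -[].
rewrite sum4 Q3_sum // mulr0 addr0.
rewrite !Qfix_sum //= !IH // cls0_1 cls1_1 cls2_1.
rewrite cnt_rec !natrD.
case: (1 <= s)%N; case: (1 <= e)%N => /=; rewrite ?subn0 ?natrM ?(natrB _ (ltnW hv)) ?mulr0 ?addr0 ?mul1r //; ring.
Qed.
End Count.


Section Multi.
Variable R : numFieldType.

Fixpoint EXP {K v} (L : seq ('I_K * (AA v -> R))) (s e n : nat) : R :=
  match L with
  | [::] => (cnt v n s e)%:R
  | p :: L' => \sum_(c : 'I_4) (\sum_(σ | cls σ == c) p.2 σ) *
      (if [&& val c != 3%N, (act c <= s)%N & (dif c <= e)%N]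
       then EXP L' (s - act c) (e - dif c) n.-1 else 0)
  end.

Lemma prod_upd K v (L : seq ('I_K * (AA v -> R))) k σ x :
  k \notin map fst L ->
  \prod_(p <- L) p.2 (st (upd x k σ) p.1) = \prod_(p <- L) p.2 (st x p.1).
Proof.
elim: L => [|p L IHL] /=; first by rewrite !big_nil.
rewrite inE negb_or => /andP[hp hL]; rewrite !big_cons IHL // st_upd.
by rewrite eq_sym (negbTE hp).
Qed.

Lemma multi K v (hv : (2 <= v)%N) (L : seq ('I_K * (AA v -> R))) :
  forall (F : {set 'I_K}) (r : 'I_K -> AA v) s e,
  uniq (map fst L) -> all (fun k => k \in F) (map fst L) ->
  \sum_(x | Q F r s e x) \prod_(p <- L) p.2 (st x p.1) = EXP L s e #|F|.
Proof.
elim: L => [|[k G] L IH] F r s e /=.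
  by move=> _ _; under eq_bigr do rewrite big_nil; apply: countQ.
move=> /andP[hkL hu] /andP[hk ha].
under eq_bigr do rewrite big_cons /=.
have hP : forall x a b, cls a = cls b -> Q F r s e (upd x k a) = Q F r s e (upd x k b).
  by move=> x a b h; apply: Q_inv.
rewrite (@step R K v hv (Q F r s e) k G (fun x => \prod_(p <- L) p.2 (st x p.1)) hP); last first.
  by move=> x σ; apply: prod_upd.
apply: eq_bigr => c _; congr (_ * _).
case: (eqVneq (val c) 3%N) => [h3|h3] /=.
  have -> : c = c3 by apply: val_inj.
  exact: Q3_sum.
have hc : #|F :\ k| = #|F|.-1 by rewrite (cardsD1 k F) hk.
rewrite Qfix_sum //; case: ifP => // _; rewrite -hc; apply: IH => //.
apply/allP => j hj; rewrite !inE (allP ha _ hj) andbT.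
by apply: contraNneq hkL => <-.
Qed.

Lemma EXP_cons K v k (G : AA v -> R) (L : seq ('I_K * (AA v -> R))) s e n :
  \sum_(σ | cls σ == c0) G σ = 0 ->
  EXP ((k, G) :: L) s.+1 e n.+1 =
  (\sum_(σ | cls σ == c1) G σ) * EXP L s e n +
  (\sum_(σ | cls σ == c2) G σ) * (if (1 <= e)%N then EXP L s (e - 1) n else 0).
Proof.
move=> h0; rewrite /= sum4 h0 mul0r add0r /= mulr0 addr0.
rewrite subSS subn0 subn0 /=; by case: (1 <= e)%N.
Qed.
End Multi.


Section Moments.
Variable R : numFieldType.
Definition M2 {v} (a b : 'I_v.-1) : R := (a == b)%:R + 1.

Lemma clsE1 v (p : 'I_v.+1 -> R) c :
  \sum_(σ : AA v | cls σ == c) p σ.1 = \sum_(σ : AA v | cls σ == c) p σ.1 * (fun _ => 1) σ.2.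
Proof. by apply: eq_bigr => *; rewrite mulr1. Qed.
Lemma clsE2 v (q : 'I_v.+1 -> R) c :
  \sum_(σ : AA v | cls σ == c) q σ.2 = \sum_(σ : AA v | cls σ == c) (fun _ => 1) σ.1 * q σ.2.
Proof. by apply: eq_bigr => *; rewrite mul1r. Qed.

Lemma c012 (c : 'I_4) : val c != 3%N -> [\/ c = c0, c = c1 | c = c2].
Proof.
case: c => [[|[|[|[|c]]]] hc] h.
- by constructor 1; apply: val_inj.
- by constructor 2; apply: val_inj.
- by constructor 3; apply: val_inj.
- by rewrite eqxx in h.
- by [].
Qed.

Variables (v : nat) (hv : (2 <= v)%N) (a b : 'I_v.-1).

Lemma fm1 (c : 'I_4) : val c != 3%N -> \sum_(σ : AA v | cls σ == c) f1 σ.1 a = 0 :> R.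
Proof.
move/c012 => [->|->|->]; rewrite (clsE1 (fun i => f1 i a)).
- by rewrite (cls0E (fun i => f1 i a) (fun _ => 1)) f10 // mul0r.
- by rewrite (cls1E (fun i => f1 i a) (fun _ => 1)); under eq_bigr do rewrite mulr1; rewrite m1.
- by rewrite (cls2E (fun i => f1 i a) (fun _ => 1)); under [X in _ - X]eq_bigr do rewrite mulr1; rewrite m1 // mul0r subr0.
Qed.
Lemma fm2 (c : 'I_4) : val c != 3%N -> \sum_(σ : AA v | cls σ == c) f1 σ.2 a = 0 :> R.
Proof.
move/c012 => [->|->|->]; rewrite (clsE2 (fun i => f1 i a)).
- by rewrite (cls0E (fun _ => 1) (fun i => f1 i a)) f10 // mulr0.
- by rewrite (cls1E (fun _ => 1) (fun i => f1 i a)); under eq_bigr do rewrite mul1r; rewrite m1.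
- by rewrite (cls2E (fun _ => 1) (fun i => f1 i a)); under [X in _ - X]eq_bigr do rewrite mul1r; rewrite m1 // mulr0 subr0.
Qed.

Definition Gii (σ : AA v) : R := f1 σ.1 a * f1 σ.1 b.
Definition Gij (σ : AA v) : R := f1 σ.1 a * f1 σ.2 b.
Definition Gji (σ : AA v) : R := f1 σ.2 a * f1 σ.1 b.
Definition Gjj (σ : AA v) : R := f1 σ.2 a * f1 σ.2 b.

Lemma ii0 : \sum_(σ | cls σ == c0) Gii σ = 0.
Proof. rewrite /Gii (eq_bigr (fun σ => (fun i => f1 i a * f1 i b) σ.1 * (fun _ => 1) σ.2)); last by move=> *; rewrite mulr1.
by rewrite (cls0E (fun i => f1 i a * f1 i b) (fun _ => 1)) f10 // mul0r mul0r. Qed.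
Lemma ii1 : \sum_(σ | cls σ == c1) Gii σ = M2 a b.
Proof. rewrite /Gii (eq_bigr (fun σ => (fun i => f1 i a * f1 i b) σ.1 * (fun _ => 1) σ.2)); last by move=> *; rewrite mulr1.
by rewrite (cls1E (fun i => f1 i a * f1 i b) (fun _ => 1)); under eq_bigr do rewrite mulr1; rewrite m2. Qed.
Lemma ii2 : \sum_(σ | cls σ == c2) Gii σ = (v%:R - 1) * M2 a b.
Proof. rewrite /Gii (eq_bigr (fun σ => (fun i => f1 i a * f1 i b) σ.1 * (fun _ => 1) σ.2)); last by move=> *; rewrite mulr1.
rewrite (cls2E (fun i => f1 i a * f1 i b) (fun _ => 1)); under [X in _ - X]eq_bigr do rewrite mulr1; rewrite m2 // m0 /M2; ring. Qed.

Lemma ij0 : \sum_(σ | cls σ == c0) Gij σ = 0.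
Proof. by rewrite /Gij (cls0E (fun i => f1 i a) (fun i => f1 i b)) f10 // mul0r. Qed.
Lemma ij1 : \sum_(σ | cls σ == c1) Gij σ = M2 a b.
Proof. by rewrite /Gij (cls1E (fun i => f1 i a) (fun i => f1 i b)) m2. Qed.
Lemma ij2 : \sum_(σ | cls σ == c2) Gij σ = - M2 a b.
Proof. by rewrite /Gij (cls2E (fun i => f1 i a) (fun i => f1 i b)) m2 // !m1 // mul0r sub0r. Qed.

Lemma ji0 : \sum_(σ | cls σ == c0) Gji σ = 0.
Proof. rewrite /Gji (eq_bigr (fun σ => (fun i => f1 i b) σ.1 * (fun i => f1 i a) σ.2)); last by move=> *; rewrite mulrC.
by rewrite (cls0E (fun i => f1 i b) (fun i => f1 i a)) f10 // mul0r. Qed.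
Lemma ji1 : \sum_(σ | cls σ == c1) Gji σ = M2 a b.
Proof. rewrite /Gji (eq_bigr (fun σ => (fun i => f1 i b) σ.1 * (fun i => f1 i a) σ.2)); last by move=> *; rewrite mulrC.
by rewrite (cls1E (fun i => f1 i b) (fun i => f1 i a)) m2 // /M2 eq_sym. Qed.
Lemma ji2 : \sum_(σ | cls σ == c2) Gji σ = - M2 a b.
Proof. rewrite /Gji (eq_bigr (fun σ => (fun i => f1 i b) σ.1 * (fun i => f1 i a) σ.2)); last by move=> *; rewrite mulrC.
by rewrite (cls2E (fun i => f1 i b) (fun i => f1 i a)) m2 // !m1 // mul0r sub0r /M2 eq_sym. Qed.

Lemma jj0 : \sum_(σ | cls σ == c0) Gjj σ = 0.
Proof. rewrite /Gjj (eq_bigr (fun σ => (fun _ => 1) σ.1 * (fun i => f1 i a * f1 i b) σ.2)); last by move=> *; rewrite mul1r.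
by rewrite (cls0E (fun _ => 1) (fun i => f1 i a * f1 i b)) f10 // mul0r mulr0. Qed.
Lemma jj1 : \sum_(σ | cls σ == c1) Gjj σ = M2 a b.
Proof. rewrite /Gjj (eq_bigr (fun σ => (fun _ => 1) σ.1 * (fun i => f1 i a * f1 i b) σ.2)); last by move=> *; rewrite mul1r.
by rewrite (cls1E (fun _ => 1) (fun i => f1 i a * f1 i b)); under eq_bigr do rewrite mul1r; rewrite m2. Qed.
Lemma jj2 : \sum_(σ | cls σ == c2) Gjj σ = (v%:R - 1) * M2 a b.
Proof. rewrite /Gjj (eq_bigr (fun σ => (fun _ => 1) σ.1 * (fun i => f1 i a * f1 i b) σ.2)); last by move=> *; rewrite mul1r.
rewrite (cls2E (fun _ => 1) (fun i => f1 i a * f1 i b)); under [X in _ - X]eq_bigr do rewrite mul1r; rewrite m2 // m0 /M2; ring. Qed.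
End Moments.


Definition lst {K v} (c : fcoord K v) : seq ('I_K * 'I_v.-1) :=
  match c with
  | inl (inl (k, a)) => [:: (k, a)]
  | inl (inr (kl, a, b)) => [:: ((val kl).1, a); ((val kl).2, b)]
  | inr (klm, a, b, e) => [:: ((val klm).1.1, a); ((val klm).1.2, b); ((val klm).2, e)]
  end.
Definition attrs {K v} (c : fcoord K v) : seq 'I_K := map fst (lst c).

Lemma fvecE (R : numFieldType) K v (i : profile K v) c :
  fvec i c = \prod_(p <- lst c) f1 (i p.1) p.2 :> R.
Proof.
case: c => [[[k a]|[[kl a] b]]|[[[klm a] b] e]]; by rewrite /= ?big_cons ?big_nil ?mulr1 ?mulrA.
Qed.

Definition ltI K (x y : 'I_K) := (x < y)%N.

Lemma attrs_sorted K v (c : fcoord K v) : sorted (@ltI K) (attrs c).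
Proof.
case: c => [[[k a]|[[kl a] b]]|[[[klm a] b] e]] //=.
  by rewrite /ltI (valP kl).
by rewrite /ltI; case/andP: (valP klm) => -> ->.
Qed.

Lemma ltI_trans K : transitive (@ltI K).
Proof. move=> y x z; exact: ltn_trans. Qed.
Lemma ltI_irr K : irreflexive (@ltI K).
Proof. move=> x; exact: ltnn. Qed.

Lemma attrs_uniq K v (c : fcoord K v) : uniq (attrs c).
Proof. exact: (sorted_uniq (@ltI_trans K) (@ltI_irr K) (attrs_sorted c)). Qed.

Lemma upd1 K v (x : PP K v) k σ j : (upd x k σ).1 j = if j == k then σ.1 else x.1 j.
Proof. by rewrite /upd /= ffunE. Qed.
Lemma upd2 K v (x : PP K v) k σ j : (upd x k σ).2 j = if j == k then σ.2 else x.2 j.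
Proof. by rewrite /upd /= ffunE. Qed.

Section Zero.
Variable R : numFieldType.

Lemma prodf_upd K v (L : seq ('I_K * 'I_v.-1)) k σ x :
  k \notin map fst L ->
  \prod_(p <- L) f1 ((upd x k σ).1 p.1) p.2 = \prod_(p <- L) f1 (x.1 p.1) p.2 :> R /\
  \prod_(p <- L) f1 ((upd x k σ).2 p.1) p.2 = \prod_(p <- L) f1 (x.2 p.1) p.2 :> R.
Proof.
elim: L => [|p L IHL] /=; first by rewrite !big_nil.
rewrite inE negb_or => /andP[hp hL]; case: (IHL hL) => h1 h2.
by rewrite !big_cons h1 h2 upd1 upd2 eq_sym (negbTE hp).
Qed.

Definition D {K v} (c : fcoord K v) (x : PP K v) : R := fvec x.1 c - fvec x.2 c.

Lemma D_inv K v (c : fcoord K v) k x σ : k \notin attrs c -> D c (upd x k σ) = D c x.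
Proof. by move=> hk; rewrite /D !fvecE; case: (prodf_upd σ x hk) => -> ->. Qed.

Lemma zero_gen K v (hv : (2 <= v)%N) (F : {set 'I_K}) (r : 'I_K -> AA v) s e k (a : 'I_v.-1)
  (H1 H2 : PP K v -> R) : k \in F ->
  (forall x σ, H1 (upd x k σ) = H1 x) -> (forall x σ, H2 (upd x k σ) = H2 x) ->
  \sum_(x | Q F r s e x) (f1 (x.1 k) a * H1 x - f1 (x.2 k) a * H2 x) = 0.
Proof.
move=> hk h1 h2; rewrite sumrB.
have hP : forall x a b, cls a = cls b -> Q F r s e (upd x k a) = Q F r s e (upd x k b).
  by move=> x a' b h; apply: Q_inv.
have E1 := @step R K v hv (Q F r s e) k (fun σ => f1 σ.1 a) H1 hP h1.
have E2 := @step R K v hv (Q F r s e) k (fun σ => f1 σ.2 a) H2 hP h2.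
rewrite /= in E1 E2; rewrite E1 E2.
have Z1 : \sum_(c : 'I_4) (\sum_(σ | cls σ == c) f1 σ.1 a) *
    \sum_(x | Q F r s e x && (st x k == rep c)) H1 x = 0.
  apply: big1 => c _; case: (eqVneq (val c) 3%N) => [h3|h3].
    have -> : c = c3 by apply: val_inj.
    by rewrite Q3_sum // mulr0.
  by rewrite fm1 // mul0r.
have Z2 : \sum_(c : 'I_4) (\sum_(σ | cls σ == c) f1 σ.2 a) *
    \sum_(x | Q F r s e x && (st x k == rep c)) H2 x = 0.
  apply: big1 => c _; case: (eqVneq (val c) 3%N) => [h3|h3].
    have -> : c = c3 by apply: val_inj.
    by rewrite Q3_sum // mulr0.
  by rewrite fm2 // mul0r.
by rewrite Z1 Z2 subr0.
Qed.

Lemma zero_case K v (hv : (2 <= v)%N) (F : {set 'I_K}) (r : 'I_K -> AA v) s e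
  (c c' : fcoord K v) k : k \in F -> k \in attrs c -> k \notin attrs c' ->
  \sum_(x | Q F r s e x) D c x * D c' x = 0.
Proof.
move=> hkF hkc hkc'; case/mapP: hkc => -[k0 a] hp0 /= hk; subst k0.
have hrem : k \notin map fst (rem (k, a) (lst c)).
  have := attrs_uniq c; rewrite /attrs (perm_uniq (perm_map fst (perm_to_rem hp0))) /=.
  by case/andP.
pose P (i : profile K v) := \prod_(p <- rem (k, a) (lst c)) f1 (i p.1) p.2 : R.
have hf : forall i, fvec i c = f1 (i k) a * P i :> R.
  by move=> i; rewrite fvecE (big_rem _ hp0).
rewrite (eq_bigr (fun x : PP K v => f1 (x.1 k) a * (P x.1 * D c' x) - f1 (x.2 k) a * (P x.2 * D c' x))); last first.
  by move=> x _; rewrite /D !hf; ring.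
apply: zero_gen => // x σ; rewrite D_inv // /P; case: (prodf_upd σ x hrem) => h1 h2; by rewrite ?h1 ?h2.
Qed.
End Zero.


Lemma cls_valid v (σ : AA v) : (val (cls σ) != 3%N) = ((σ.1 == ord0) == (σ.2 == ord0)).
Proof. rewrite /= /clsn; case: (σ.1 == ord0); case: (σ.2 == ord0) => //; by case: (σ.1 == σ.2). Qed.
Lemma cls_act v (σ : AA v) : act (cls σ) = (σ.1 != ord0) && (σ.2 != ord0).
Proof. rewrite /act /= /clsn; case: (σ.1 == ord0); case: (σ.2 == ord0) => //; by case: (σ.1 == σ.2). Qed.
Lemma cls_dif v (σ : AA v) : dif (cls σ) = [&& σ.1 != ord0, σ.2 != ord0 & σ.1 != σ.2].
Proof. rewrite /dif /= /clsn; case: (σ.1 == ord0); case: (σ.2 == ord0) => //; by case: (σ.1 == σ.2). Qed.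

Definition r0 {K v} : 'I_K -> AA v := fun _ => (ord0, ord0).

Lemma inXSd_Q K v S d (x : PP K v) : in_XSd S d x = Q setT r0 S d x.
Proof.
rewrite /in_XSd /in_XS /Q.
have T1 : [forall j, (j \notin [set: 'I_K]) ==> (st x j == r0 j)] = true.
  by apply/forallP => j; rewrite inE.
rewrite T1 /=.
apply/idP/idP.
- case/andP => /existsP[A /andP[/eqP hA /forallP hall]] /eqP hd.
  have hact : [set j in [set: 'I_K] | act (cls (st x j))] = A.
    apply/setP => j; rewrite !inE cls_act /st /=; have := hall j.
    by case: (j \in A) => /andP[h1 h2] //; rewrite h1.
  have hdif : [set j in [set: 'I_K] | dif (cls (st x j))] = [set k | x.1 k != x.2 k].
    apply/setP => j; rewrite !inE cls_dif /st /=; have := hall j.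
    case: (j \in A) => /andP[h1 h2]; first by rewrite h1 h2.
    by rewrite (eqP h1) (eqP h2) eqxx.
  rewrite hact hdif hA hd !eqxx !andbT; apply/forallP => j; rewrite inE cls_valid /st /=.
  by have := hall j; case: (j \in A) => /andP[h1 h2]; rewrite ?(negbTE h1) ?(negbTE h2) ?h1 ?h2.
- case/and3P => /forallP hv /eqP hS /eqP hd; apply/andP; split.
    apply/existsP; exists [set j in [set: 'I_K] | act (cls (st x j))]; rewrite hS eqxx /=.
    apply/forallP => j; rewrite !inE cls_act /st /=; have := hv j; rewrite inE cls_valid /st /=.
    by case: (x.1 j == ord0); case: (x.2 j == ord0).
  rewrite -hd; apply/eqP; apply: eq_card => j; rewrite !inE cls_dif /st /=.
  have := hv j; rewrite inE cls_valid /st /=.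
  case: (eqVneq (x.1 j) ord0) => h1; case: (eqVneq (x.2 j) ord0) => h2 //=.
  by move=> _; rewrite h1 h2 eqxx.
Qed.

Lemma infoM_red (R : numFieldType) K v (hv : (2 <= v)%N) S d (c c' : fcoord K v) :
  infoM (xibar R K v S d) c c' =
  ((cnt v K S d)%:R)^-1 * \sum_(x | Q setT r0 S d x) D R c x * D R c' x.
Proof.
rewrite /infoM /xibar.
have hN : #|[pred y : PP K v | in_XSd S d y]| = cnt v K S d.
  apply/eqP; rewrite -(eqr_nat R) -(@countQ R K v hv K setT r0 S d (etrans (cardsT _) (card_ord K))).
  by rewrite sumr_const; apply/eqP; congr (_ *+ _); apply: eq_card => x; rewrite inE inXSd_Q.
rewrite hN mulr_sumr [RHS]big_mkcond /=; apply: eq_bigr => x _; rewrite ffunE inXSd_Q.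
by case: ifP => // _; rewrite mul0r.
Qed.


Lemma cntB_nat v n s e : (n.+1 * (v * (v - 1)) * cnt v n s e = e.+1 * cnt v n.+1 s.+1 e.+1)%N.
Proof.
rewrite /cnt subSS expnS.
have h1 := mul_bin_diag n.+1 s. have h2 := mul_bin_diag s.+1 e. rewrite /= in h1 h2.
transitivity ((n.+1 * 'C(n, s)) * 'C(s, e) * v ^ (s - e) * (v * (v - 1) * (v * (v - 1)) ^ e))%N; first by ring.
rewrite h1.
transitivity ('C(n.+1, s.+1) * (s.+1 * 'C(s, e)) * v ^ (s - e) * (v * (v - 1) * (v * (v - 1)) ^ e))%N; first by ring.
rewrite h2; ring.
Qed.

Lemma cntA_nat v n s e : (n.+1 * v * cnt v n s e = (s.+1 - e) * cnt v n.+1 s.+1 e)%N.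
Proof.
rewrite /cnt.
have h1 := mul_bin_diag n.+1 s. have h2 := mul_bin_down s.+1 e. rewrite /= in h1 h2.
transitivity ((n.+1 * 'C(n, s)) * 'C(s, e) * (v * v ^ (s - e)) * (v * (v - 1)) ^ e)%N; first by ring.
rewrite h1.
case: (leqP e s) => hes.
  have -> : (s.+1 - e = (s - e).+1)%N by lia.
  rewrite expnS.
  transitivity ('C(n.+1, s.+1) * (s.+1 * 'C(s, e)) * (v * v ^ (s - e)) * (v * (v - 1)) ^ e)%N; first by ring.
  rewrite h2; have -> : (s.+1 - e = (s - e).+1)%N by lia. ring.
rewrite (bin_small hes).
case: (eqVneq e s.+1) => [->|hne]; first by rewrite subnn !muln0 !mul0n.
by rewrite (bin_small (_ : (s.+1 < e)%N)) ?muln0 ?mul0n //; lia.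
Qed.

Ltac nzR := repeat (match goal with |- is_true (_ && _) => apply/andP; split end);
  rewrite ?(addrC 1) ?natr1 -?natrM ?pnatr_eq0 ?muln_eq0; try lia.

Section Rel.
Variable R : numFieldType.
Variables (v : nat) (hv : (2 <= v)%N).

Lemma vR_neq0 : (v%:R : R) != 0. Proof. rewrite pnatr_eq0; lia. Qed.
Lemma wR_neq0 : ((v * (v - 1))%:R : R) != 0. Proof. rewrite pnatr_eq0 muln_eq0; apply/norP; split; apply/eqP; lia. Qed.

Lemma RB n s e : (cnt v n s e)%:R = (e.+1)%:R / ((n.+1)%:R * (v * (v - 1))%:R) * (cnt v n.+1 s.+1 e.+1)%:R :> R.
Proof.
apply: (mulfI (_ : ((n.+1)%:R * (v * (v - 1))%:R : R) != 0)).
  by rewrite mulf_eq0 negb_or wR_neq0 andbT pnatr_eq0.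
have hR : ((n.+1)%:R * (v*(v-1))%:R * (cnt v n s e)%:R : R) = (e.+1)%:R * (cnt v n.+1 s.+1 e.+1)%:R.
  by rewrite -!natrM cntB_nat.
rewrite hR; field; nzR.
Qed.

Lemma RA n s e : (cnt v n s e)%:R = ((s.+1)%:R - e%:R) / ((n.+1)%:R * v%:R) * (cnt v n.+1 s.+1 e)%:R :> R.
Proof.
apply: (mulfI (_ : ((n.+1)%:R * v%:R : R) != 0)).
  by rewrite mulf_eq0 negb_or vR_neq0 andbT pnatr_eq0.
have hR : ((n.+1)%:R * v%:R * (cnt v n s e)%:R : R) = (s.+1 - e)%:R * (cnt v n.+1 s.+1 e)%:R.
  by rewrite -!natrM cntA_nat.
rewrite hR.
case: (leqP e s.+1) => he.
  rewrite natrB //; field; nzR.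
by rewrite /cnt (bin_small he) ?muln0 ?mul0n ?mulr0.
Qed.

Lemma cnt_pos n s e : (e <= s <= n)%N -> (cnt v n s e)%:R != 0 :> R.
Proof.
move=> /andP[h1 h2]; rewrite pnatr_eq0 /cnt !muln_eq0 !negb_or -!lt0n !bin_gt0 h1 h2 /=.
rewrite !expn_gt0 /=; apply/andP; split; [lia|]. apply/orP; left; rewrite muln_gt0; apply/andP; split; lia.
Qed.
End Rel.


Section Blocks.
Variable R : numFieldType.
Variables (v : nat) (hv : (2 <= v)%N).

Lemma v1R : (v.-1)%:R = v%:R - 1 :> R.
Proof. by rewrite -subn1 natrB //; lia. Qed.
Lemma wR : (v * (v - 1))%:R = v%:R * (v%:R - 1) :> R.
Proof. by rewrite natrM natrB //; lia. Qed.
Lemma v1_neq0 : v%:R - 1 != 0 :> R.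
Proof. by rewrite -v1R pnatr_eq0; lia. Qed.
Lemma v_neq0 : v%:R != 0 :> R.
Proof. by rewrite pnatr_eq0; lia. Qed.

Ltac nz := rewrite ?v1_neq0 ?v_neq0; repeat (apply/andP; split); rewrite ?subr_eq0 ?nat1r ?natr1 -?natrD ?pnatr_eq0 ?pnatr_eq1 ?eqr_nat //; try lia.

Lemma main_block K S d (k : 'I_K) (a a' : 'I_v.-1) :
  (1 <= S)%N -> (S <= K)%N -> (d <= S)%N ->
  ((cnt v K S d)%:R)^-1 * \sum_(x | Q setT r0 S d x)
     D R (inl (inl (k, a))) x * D R (inl (inl (k, a'))) x
  = h1 K v S d * Mm a a'.
Proof.
move=> hS hSK hd.
have hN := cnt_pos R hv (n := K) (s := S) (e := d); rewrite hd hSK /= in hN; have {}hN := hN isT.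
rewrite (eq_bigr (fun x => \prod_(p <- [:: (k, Gii R a a')]) p.2 (st x p.1)
   - \prod_(p <- [:: (k, Gij R a a')]) p.2 (st x p.1)
   - \prod_(p <- [:: (k, Gji R a a')]) p.2 (st x p.1)
   + \prod_(p <- [:: (k, Gjj R a a')]) p.2 (st x p.1))); last first.
  by move=> x _; rewrite /D /= !big_cons !big_nil /Gii /Gij /Gji /Gjj /=; ring.
have hall : forall L : seq ('I_K * (AA v -> R)), all (fun k => k \in [set: 'I_K]) (map fst L).
  by move=> L; apply/allP => j _; rewrite inE.
have hK : #|[set: 'I_K]| = K by rewrite cardsT card_ord.
rewrite big_split !sumrB /= !multi ?hall // hK; clear hall hK.
case: K hSK k hN => [|K] hSK k hN; first by lia.
case: S hS hSK hd hN => [|S] hS hSK hd hN; first by lia.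
rewrite !EXP_cons ?ii0 ?ij0 ?ji0 ?jj0 //= !(ii1 R hv, ii2 R hv, ij1 R hv, ij2 R hv, ji1 R hv, ji2 R hv, jj1 R hv, jj2 R hv).
rewrite /h1 /Mm /M2 v1R.
case: d hd hN => [|d] hd hN /=.
  by field; rewrite ?hN; nz.
have -> : (d.+1 - 1 = d)%N by lia.
rewrite (RB R hv K S d) wR.
by field; rewrite ?hN; nz.
Qed.

Lemma pair_block K S d (kl : pair_idx K) (a b a' b' : 'I_v.-1) :
  (2 <= S)%N -> (S <= K)%N -> (d <= S)%N ->
  ((cnt v K S d)%:R)^-1 * \sum_(x | Q setT r0 S d x)
     D R (inl (inr (kl, a, b))) x * D R (inl (inr (kl, a', b'))) x
  = h2 K v S d * (Mm a a' * Mm b b').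
Proof.
move=> hS hSK hd.
have hN := cnt_pos R hv (n := K) (s := S) (e := d); rewrite hd hSK /= in hN; have {}hN := hN isT.
set k := (val kl).1; set l := (val kl).2.
have hkl : k != l by rewrite neq_ltn (valP kl).
rewrite (eq_bigr (fun x => \prod_(p <- [:: (k, Gii R a a'); (l, Gii R b b')]) p.2 (st x p.1)
   - \prod_(p <- [:: (k, Gij R a a'); (l, Gij R b b')]) p.2 (st x p.1)
   - \prod_(p <- [:: (k, Gji R a a'); (l, Gji R b b')]) p.2 (st x p.1)
   + \prod_(p <- [:: (k, Gjj R a a'); (l, Gjj R b b')]) p.2 (st x p.1))); last first.
  by move=> x _; rewrite /D /= !big_cons !big_nil /Gii /Gij /Gji /Gjj /=; ring.
have hall : forall L : seq ('I_K * (AA v -> R)), all (fun k => k \in [set: 'I_K]) (map fst L).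
  by move=> L; apply/allP => j _; rewrite inE.
have hK : #|[set: 'I_K]| = K by rewrite cardsT card_ord.
have hu : forall G1 G2 : AA v -> R, uniq (map fst [:: (k, G1); (l, G2)]) by move=> *; rewrite /= inE hkl.
rewrite big_split !sumrB !multi ?hall ?hu // hK; clear hall hK hu.
case: K hSK kl k l hkl hN => [|[|K]] hSK kl k l hkl hN; try by lia.
case: S hS hSK hd hN => [|[|S]] hS hSK hd hN; try by lia.
rewrite !EXP_cons ?ii0 ?ij0 ?ji0 ?jj0 //= !(ii1 R hv, ii2 R hv, ij1 R hv, ij2 R hv, ji1 R hv, ji2 R hv, jj1 R hv, jj2 R hv).
rewrite /h2 /Mm /M2 v1R.
case: d hd hN => [|[|d]] hd hN /=.
- by field; rewrite ?hN; nz.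
- have -> : (1 - 1 = 0)%N by [].
  rewrite (RA R hv K S 0) (RB R hv K.+1 S.+1 0) wR.
  by field; rewrite ?hN; nz.
- have -> : (d.+2 - 1 = d.+1)%N by lia.
  have -> : (d.+1 - 1 = d)%N by lia.
  rewrite (RB R hv K S d) (RA R hv K S d.+1) (RB R hv K.+1 S.+1 d.+1) wR.
  by field; rewrite ?hN; nz.
Qed.

Lemma trip_block K S d (klm : trip_idx K) (a b e a' b' e' : 'I_v.-1) :
  (3 <= S)%N -> (S <= K)%N -> (d <= S)%N ->
  ((cnt v K S d)%:R)^-1 * \sum_(x | Q setT r0 S d x)
     D R (inr (klm, a, b, e)) x * D R (inr (klm, a', b', e')) x
  = h3 K v S d * (Mm a a' * Mm b b' * Mm e e').
Proof.
move=> hS hSK hd.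
have hN := cnt_pos R hv (n := K) (s := S) (e := d); rewrite hd hSK /= in hN; have {}hN := hN isT.
set k := (val klm).1.1; set l := (val klm).1.2; set m := (val klm).2.
have hkl : k != l by case/andP: (valP klm) => h1 h2; rewrite neq_ltn h1.
have hlm : l != m by case/andP: (valP klm) => h1 h2; rewrite neq_ltn h2.
have hkm : k != m by case/andP: (valP klm) => h1 h2; rewrite neq_ltn (ltn_trans h1 h2).
rewrite (eq_bigr (fun x => \prod_(p <- [:: (k, Gii R a a'); (l, Gii R b b'); (m, Gii R e e')]) p.2 (st x p.1)
   - \prod_(p <- [:: (k, Gij R a a'); (l, Gij R b b'); (m, Gij R e e')]) p.2 (st x p.1)
   - \prod_(p <- [:: (k, Gji R a a'); (l, Gji R b b'); (m, Gji R e e')]) p.2 (st x p.1)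
   + \prod_(p <- [:: (k, Gjj R a a'); (l, Gjj R b b'); (m, Gjj R e e')]) p.2 (st x p.1))); last first.
  by move=> x _; rewrite /D /= !big_cons !big_nil /Gii /Gij /Gji /Gjj /=; ring.
have hall : forall L : seq ('I_K * (AA v -> R)), all (fun k => k \in [set: 'I_K]) (map fst L).
  by move=> L; apply/allP => j _; rewrite inE.
have hK : #|[set: 'I_K]| = K by rewrite cardsT card_ord.
have hu : forall G1 G2 G3 : AA v -> R, uniq (map fst [:: (k, G1); (l, G2); (m, G3)]).
  by move=> *; rewrite /= !inE negb_or hkl hkm hlm.
rewrite big_split !sumrB !multi ?hall ?hu // hK; clear hall hK hu.
case: K hSK klm k l m hkl hlm hkm hN => [|[|[|K]]] hSK klm k l m hkl hlm hkm hN; try by lia.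
case: S hS hSK hd hN => [|[|[|S]]] hS hSK hd hN; try by lia.
rewrite !EXP_cons ?ii0 ?ij0 ?ji0 ?jj0 //= !(ii1 R hv, ii2 R hv, ij1 R hv, ij2 R hv, ji1 R hv, ji2 R hv, jj1 R hv, jj2 R hv).
rewrite /h3 /lambda /Mm /M2 v1R.
case: d hd hN => [|[|[|d]]] hd hN /=.
- by field; rewrite ?hN; nz.
- have -> : (1 - 1 = 0)%N by [].
  rewrite (RA R hv K S 0) (RA R hv K.+1 S.+1 0) (RB R hv K.+2 S.+2 0) wR.
  by field; rewrite ?hN; nz.
- have -> : (2 - 1 = 1)%N by [].
  have -> : (1 - 1 = 0)%N by [].
  rewrite (RA R hv K S 1) (RA R hv K S 0) (RA R hv K.+1 S.+1 1) (RB R hv K.+1 S.+1 0).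
  rewrite (RB R hv K.+2 S.+2 1) wR.
  by field; rewrite ?hN; nz.
- have -> : (d.+3 - 1 = d.+2)%N by lia.
  have -> : (d.+2 - 1 = d.+1)%N by lia.
  have -> : (d.+1 - 1 = d)%N by lia.
  rewrite (RA R hv K S d.+2) (RA R hv K S d.+1) (RB R hv K S d).
  rewrite (RA R hv K.+1 S.+1 d.+2) (RB R hv K.+1 S.+1 d.+1).
  rewrite (RB R hv K.+2 S.+2 d.+2) wR.
  by field; rewrite ?hN; nz.
Qed.
End Blocks.


Lemma exists_diff K v (c c' : fcoord K v) : attrs c != attrs c' ->
  exists k, (k \in attrs c /\ k \notin attrs c') \/ (k \in attrs c' /\ k \notin attrs c).
Proof.
move=> hA.
case: (boolP (all (fun x => x \in attrs c') (attrs c))) => h1; last first.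
  by case/allPn: h1 => k hk hk'; exists k; left.
case: (boolP (all (fun x => x \in attrs c) (attrs c'))) => h2; last first.
  by case/allPn: h2 => k hk hk'; exists k; right.
case/eqP: hA; apply: (irr_sorted_eq (@ltI_trans K) (@ltI_irr K) (attrs_sorted c) (attrs_sorted c')).
move=> x; apply/idP/idP => hx; [exact: (allP h1) | exact: (allP h2)].
Qed.

Lemma pair_eq K (kl kl' : pair_idx K) : (val kl).1 = (val kl').1 -> (val kl).2 = (val kl').2 -> kl = kl'.
Proof.
move=> h1 h2; apply: val_inj; by rewrite [val kl]surjective_pairing [val kl']surjective_pairing h1 h2.
Qed.
Lemma trip_eq K (x y : trip_idx K) : (val x).1.1 = (val y).1.1 -> (val x).1.2 = (val y).1.2 ->
  (val x).2 = (val y).2 -> x = y.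
Proof.
move=> h1 h2 h3; apply: val_inj.
by rewrite [val x]surjective_pairing [val y]surjective_pairing [(val x).1]surjective_pairing
  [(val y).1]surjective_pairing h1 h2 h3.
Qed.

Lemma blockM0 (R : numFieldType) K v S d (c c' : fcoord K v) :
  attrs c != attrs c' -> blockM S d c c' = 0 :> R.
Proof.
case: c => [[[k a]|[[kl a] b]]|[[[klm a] b] e]];
case: c' => [[[k' a']|[[kl' a'] b']]|[[[klm' a'] b'] e']] //= hA.
- case: (eqVneq k k') => [ee|ne]; first by rewrite ee eqxx in hA.
  by rewrite mul0r mulr0.
- case: (eqVneq kl kl') => [ee|ne]; first by rewrite ee eqxx in hA.
  by rewrite !mul0r mulr0.
- case: (eqVneq klm klm') => [ee|ne]; first by rewrite ee eqxx in hA.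
  by rewrite !mul0r mulr0.
Qed.

Theorem lemma1 (R : realFieldType) (v K S d : nat)
  (hv : (2 <= v)%N) (hK : (3 <= K)%N) (hS3 : (3 <= S)%N) (hSK : (S <= K)%N)
  (hd : (d <= S)%N) :
  forall c c' : fcoord K v,
    infoM (xibar R K v S d) c c' = blockM S d c c'.
Proof.
move=> c c'; rewrite infoM_red //.
case: (eqVneq (attrs c) (attrs c')) => hA; last first.
  rewrite blockM0 //.
  case: (exists_diff hA) => k [[h1 h2]|[h1 h2]].
    by rewrite (@zero_case R K v hv setT r0 S d c c' k (in_setT k) h1 h2) mulr0.
  rewrite (eq_bigr (fun x => D R c' x * D R c x)); last by move=> *; rewrite mulrC.
  by rewrite (@zero_case R K v hv setT r0 S d c' c k (in_setT k) h1 h2) mulr0.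
move: hA.
case: c => [[[k a]|[[kl a] b]]|[[[klm a] b] e]];
case: c' => [[[k' a']|[[kl' a'] b']]|[[[klm' a'] b'] e']] //= hA.
- case: hA => <-; rewrite eqxx mul1r; apply: main_block => //; lia.
- case: hA => h1 h2; rewrite (pair_eq h1 h2) eqxx mul1r; apply: pair_block => //; lia.
- case: hA => h1 h2 h3; rewrite (trip_eq h1 h2 h3) eqxx !mul1r; apply: trip_block => //; lia.
Qed.
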